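(* Let $n \geq 1$ be the number of training examples and let $\alpha_0, \beta_0 > 0$ be the parameters of a Beta prior $\textsc{Beta}(\alpha_0,\beta_0)$. Let $\widehat{P}_X \colon \mathbb{R}^d \to [0,1]$ be an estimator of the data density $\mathbb{P}(X=x)$ and $\widehat{P}_{Y|X} \colon \mathbb{R}^d \to [0,1]$ an estimator of the class-conditional probability $\mathbb{P}(Y=1\mid X=x)$, and define the expected anomaly posterior score $$\phi(x) = \frac{\alpha_0 + n\, \widehat{P}_X(x)\, \widehat{P}_{Y|X}(x)}{\alpha_0 + \beta_0 + n\, \widehat{P}_X(x)}.$$ Let $x_{\mathrm{r}}, x_{\mathrm{u}}, x_{\mathrm{i}} \in \mathbb{R}^d$ be, respectively, a realistic, an unrealistic, and an indistinguishable anomaly, and suppose the estimators satisfy the corresponding properties, namely $\widehat{P}_{Y|X}(x_{\mathrm{r}}) \in [0.5,1]$ and $\widehat{P}_X(x_{\mathrm{r}})>0$; $\widehat{P}_{Y|X}(x_{\mathrm{u}}) \in [0.5,1]$ and $\widehat{P}_X(x_{\mathrm{u}})=0$; $\widehat{P}_{Y|X}(x_{\mathrm{i}}) = 0$ and $\widehat{P}_X(x_{\mathrm{i}})>0$. Then $$\frac{\alpha_0}{\alpha_0+\beta_0} < 0.5 \implies \phi(x_{\mathrm{r}}) > \phi(x_{\mathrm{u}}) > \phi(x_{\mathrm{i}}).$$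
   Context: Setting: $X$ is a random feature vector in $\mathbb{R}^d$ and $Y\in\{0,1\}$ a label ($0$ normal, $1$ anomaly). An example $x$ is called a realistic anomaly if $\mathbb{P}(Y=1\mid X=x)\in[0.5,1]$ and $\mathbb{P}(X=x)>0$; an unrealistic anomaly if $\mathbb{P}(Y=1\mid X=x)\in[0.5,1]$ and $\mathbb{P}(X=x)=0$; an indistinguishable anomaly if $\mathbb{P}(Y=1\mid X=x)=0$ and $\mathbb{P}(X=x)>0$. The score $\phi(x)$ is the mean of the posterior $\textsc{Beta}(\alpha_0+\alpha_1,\beta_0+N-\alpha_1)$ of the anomaly probability $p_x$ with pseudo-counts $N = n\widehat{P}_X(x)$ and $\alpha_1 = n\widehat{P}_X(x)\widehat{P}_{Y|X}(x)$. *)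

(* Defs.v *)
From Stdlib Require Export Reals.
From Stdlib Require Fin.
Open Scope R_scope.

Definition Rd (d : nat) : Type := Fin.t d -> R.

(* Expected anomaly posterior score: mean of Beta(a0 + n PX PYX, b0 + n PX - n PX PYX). *)
Definition phi {d : nat} (n : nat) (alpha0 beta0 : R)
  (PX PYX : Rd d -> R) (x : Rd d) : R :=
  (alpha0 + INR n * PX x * PYX x) / (alpha0 + beta0 + INR n * PX x).

(* Main.v *)
Require Import Defs.
From Stdlib Require Import Reals Lra Psatz.
Open Scope R_scope.

Theorem theorem1 (d n : nat) (alpha0 beta0 : R)
  (PX PYX : Rd d -> R) (xr xu xi : Rd d) :
  (1 <= n)%nat ->
  0 < alpha0 -> 0 < beta0 ->
  (forall x, 0 <= PX x <= 1) ->
  (forall x, 0 <= PYX x <= 1) ->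
  ((1/2) <= PYX xr <= 1) -> 0 < PX xr ->
  ((1/2) <= PYX xu <= 1) -> PX xu = 0 ->
  PYX xi = 0 -> 0 < PX xi ->
  alpha0 / (alpha0 + beta0) < (1/2) ->
  phi n alpha0 beta0 PX PYX xr > phi n alpha0 beta0 PX PYX xu /\
  phi n alpha0 beta0 PX PYX xu > phi n alpha0 beta0 PX PYX xi.
Proof.
  intros Hn Ha Hb _ _ [Hr1 Hr2] Hpr [Hu1 Hu2] Hpu Hyi Hpi Hq.
  unfold phi. rewrite Hpu, Hyi.
  assert (HnR : 1 <= INR n) by (apply (le_INR 1); exact Hn).
  assert (Nr : 0 < INR n * PX xr) by (apply Rmult_lt_0_compat; lra).
  assert (Ni : 0 < INR n * PX xi) by (apply Rmult_lt_0_compat; lra).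
  assert (Hab : alpha0 < beta0).
  { apply (Rmult_lt_compat_r (alpha0 + beta0)) in Hq; [|lra].
    unfold Rdiv in Hq. rewrite Rmult_assoc, Rinv_l in Hq by lra. lra. }
  set (Nx := INR n * PX xr) in *. set (Ni' := INR n * PX xi) in *.
  replace (alpha0 + Nx * PYX xr) with (alpha0 + Nx * PYX xr) by reflexivity.
  rewrite ?Rmult_0_r, ?Rmult_0_l, ?Rplus_0_r.
  split; unfold Rgt, Rdiv.
  - apply (Rmult_lt_reg_r ((alpha0 + beta0) * (alpha0 + beta0 + Nx))). nra.
    replace (alpha0 * / (alpha0 + beta0) * ((alpha0 + beta0) * (alpha0 + beta0 + Nx)))
      with (alpha0 * (alpha0 + beta0 + Nx)) by (field; lra).
    replace ((alpha0 + Nx * PYX xr) * / (alpha0 + beta0 + Nx) * ((alpha0 + beta0) * (alpha0 + beta0 + Nx)))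
      with ((alpha0 + Nx * PYX xr) * (alpha0 + beta0)) by (field; lra).
    assert (0 < Nx * (PYX xr * (alpha0 + beta0) - alpha0)) by (apply Rmult_lt_0_compat; nra).
    nra.
  - apply (Rmult_lt_reg_r ((alpha0 + beta0) * (alpha0 + beta0 + Ni'))). nra.
    replace (alpha0 * / (alpha0 + beta0) * ((alpha0 + beta0) * (alpha0 + beta0 + Ni')))
      with (alpha0 * (alpha0 + beta0 + Ni')) by (field; lra).
    replace (alpha0 * / (alpha0 + beta0 + Ni') * ((alpha0 + beta0) * (alpha0 + beta0 + Ni')))
      with (alpha0 * (alpha0 + beta0)) by (field; lra).
    nra.
Qed.
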